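(* Let $K\ge 2$ and $d\ge K-1$ be integers, let $n_1,\dots,n_K\ge 1$ be integers (arbitrary, possibly very different from one another, i.e. the class sizes may be imbalanced), let $N=\sum_{k=1}^K n_k$, and let $E_H>0$, $E_W>0$. Let $\mathbf{W}^*=[\mathbf{w}_1^*,\dots,\mathbf{w}_K^*]\in\mathbb{R}^{d\times K}$ be a fixed scaled simplex equiangular tight frame, i.e. $\mathbf{W}^*=\sqrt{E_W}\sqrt{\tfrac{K}{K-1}}\,\mathbf{U}\left(\mathbf{I}_K-\tfrac1K\mathbf{1}_K\mathbf{1}_K^T\right)$ for some $\mathbf{U}\in\mathbb{R}^{d\times K}$ with $\mathbf{U}^T\mathbf{U}=\mathbf{I}_K$; equivalently it satisfies ${\mathbf{w}_k^*}^T\mathbf{w}_{k'}^*=E_W\left(\tfrac{K}{K-1}\delta_{k,k'}-\tfrac{1}{K-1}\right)$ for all $k,k'\in\{1,\dots,K\}$. Consider the optimization problem over feature vectors $\mathbf{H}=(\mathbf{h}_{k,i})_{1\le k\le K,\,1\le i\le n_k}$, $\mathbf{h}_{k,i}\in\mathbb{R}^d$: $$\min_{\mathbf{H}}\ \frac1N\sum_{k=1}^K\sum_{i=1}^{n_k}\mathcal{L}_{CE}(\mathbf{h}_{k,i},\mathbf{W}^* )\quad\text{s.t.}\quad \|\mathbf{h}_{k,i}\|^2\le E_H\ \ \forall\, 1\le k\le K,\ 1\le i\le n_k,$$ where for a feature $\mathbf{h}_{k,i}$ of class $k$, $\mathcal{L}_{CE}(\mathbf{h}_{k,i},\mathbf{W}^*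 )=-\log\frac{\exp(\mathbf{h}_{k,i}^T\mathbf{w}_k^* )}{\sum_{j=1}^K\exp(\mathbf{h}_{k,i}^T\mathbf{w}_j^* )}$. Then every global minimizer $\mathbf{H}^*=(\mathbf{h}^*_{k,i})$ of this problem satisfies $${\mathbf{h}^*_{k,i}}^T\mathbf{w}^*_{k'}=\sqrt{E_HE_W}\left(\frac{K}{K-1}\delta_{k,k'}-\frac{1}{K-1}\right)\quad\text{for all } 1\le k,k'\le K,\ 1\le i\le n_k,$$ i.e. the optimal features form a simplex equiangular tight frame with the same directions as $\mathbf{W}^*$ and length $\sqrt{E_H}$, regardless of whether the class sizes $n_k$ are balanced.
   Context: $\delta_{k,k'}$ denotes the Kronecker delta ($1$ if $k=k'$, $0$ otherwise), $\mathbf{I}_K$ is the $K\times K$ identity matrix and $\mathbf{1}_K$ is the all-ones vector in $\mathbb{R}^K$. $\mathbf{h}_{k,i}$ represents the (last-layer) feature of the $i$-th training sample of class $k$; the classifier $\mathbf{W}^*$ is fixed and not optimized. $\|\cdot\|$ is the Euclidean norm. *)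

(* Defs.v *)
From mathcomp Require Import all_boot all_order all_algebra.
From mathcomp Require Import all_classical all_reals all_analysis.
Set Implicit Arguments. Unset Strict Implicit. Unset Printing Implicit Defensive.
Import Order.TTheory GRing.Theory Num.Theory.
Local Open Scope ring_scope.

Definition dotv (R : realType) (d : nat) (u v : 'cV[R]_d) : R := (u^T *m v) 0 0.

Definition is_scaled_simplex_ETF (R : realType) (d K : nat) (EW : R)
  (W : 'M[R]_(d, K)) : Prop :=
  exists U : 'M[R]_(d, K),
    U^T *m U = 1%:M /\
    W = (Num.sqrt EW * Num.sqrt (K%:R / (K%:R - 1)))
          *: (U *m (1%:M - K%:R^-1 *: const_mx 1)).

Definition CE_loss (R : realType) (d K : nat) (W : 'M[R]_(d, K))
  (k : 'I_K) (h : 'cV[R]_d) : R :=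
  - ln (expR (dotv h (col k W)) / \sum_(j < K) expR (dotv h (col j W))).

Definition features (R : realType) (d K : nat) (n : 'I_K -> nat) :=
  forall k : 'I_K, 'I_(n k) -> 'cV[R]_d.

Definition N_total (K : nat) (n : 'I_K -> nat) : nat := \sum_(k < K) n k.

Definition objective (R : realType) (d K : nat) (n : 'I_K -> nat)
  (W : 'M[R]_(d, K)) (H : features R d n) : R :=
  (N_total n)%:R^-1 * \sum_(k < K) \sum_(i < n k) CE_loss W k (H k i).

Definition feasible (R : realType) (d K : nat) (n : 'I_K -> nat) (EH : R)
  (H : features R d n) : Prop :=
  forall (k : 'I_K) (i : 'I_(n k)), dotv (H k i) (H k i) <= EH.

Definition global_minimizer (R : realType) (d K : nat) (n : 'I_K -> nat)
  (EH : R) (W : 'M[R]_(d, K)) (H : features R d n) : Prop :=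
  feasible EH H /\
  forall H' : features R d n, feasible EH H' -> objective W H <= objective W H'.

(* Main.v *)
Require Import Defs.
From mathcomp Require Import all_boot all_order all_algebra.
From mathcomp Require Import all_classical all_reals all_analysis.
From mathcomp Require Import ring lra.
Import Order.TTheory GRing.Theory Num.Theory.
Local Open Scope ring_scope.

Section Aux.
Variable R : realType.

Lemma dotvE d (u v : 'cV[R]_d) : dotv u v = \sum_l u l 0 * v l 0.
Proof. by rewrite /dotv !mxE; apply: eq_bigr => l _; rewrite !mxE. Qed.

Lemma dotvC d (u v : 'cV[R]_d) : dotv u v = dotv v u.
Proof. by rewrite !dotvE; apply: eq_bigr => l _; rewrite mulrC. Qed.

Lemma dotvZl d a (u v : 'cV[R]_d) : dotv (a *: u) v = a * dotv u v.
Proof. by rewrite !dotvE mulr_sumr; apply: eq_bigr => l _; rewrite !mxE mulrA. Qed.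

Lemma dotvZr d a (u v : 'cV[R]_d) : dotv u (a *: v) = a * dotv u v.
Proof. by rewrite dotvC dotvZl dotvC. Qed.

Lemma dotvBl d (u v w : 'cV[R]_d) : dotv (u - v) w = dotv u w - dotv v w.
Proof. by rewrite !dotvE -sumrB; apply: eq_bigr => l _; rewrite !mxE mulrBl. Qed.

Lemma dotvBr d (u v w : 'cV[R]_d) : dotv w (u - v) = dotv w u - dotv w v.
Proof. by rewrite dotvC dotvBl !(dotvC _ w). Qed.

Lemma dotv_eq0 d (u : 'cV[R]_d) : dotv u u = 0 -> u = 0.
Proof.
rewrite dotvE => H0; apply/matrixP => l j; rewrite (ord1 j) mxE.
have := @psumr_eq0P _ _ predT (fun l => u l 0 * u l 0) (fun x _ => ltac:(by rewrite /= -expr2 sqr_ge0)) H0 l isT.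
by move=> /eqP; rewrite mulf_eq0 orbb => /eqP.
Qed.

Lemma sum_delta K (j : 'I_K) (F : 'I_K -> R) :
  \sum_l ((l == j)%:R * F l) = F j.
Proof.
rewrite (bigD1 j) //= eqxx mul1r big1 ?addr0 // => l /negbTE ->; by rewrite mul0r.
Qed.

Definition Pm K : 'M[R]_K := 1%:M - K%:R^-1 *: const_mx 1.

Lemma PmE K l j : Pm K l j = (l == j)%:R - K%:R^-1.
Proof. by rewrite !mxE mulr1. Qed.

Lemma sumPm K (m : 'I_K) : (0 < K)%N -> \sum_j Pm K m j = 0.
Proof.
move=> K0; under eq_bigr => j _ do rewrite PmE eq_sym -[(j == m)%:R]mulr1.
rewrite sumrB sum_delta sumr_const card_ord.
have : K%:R != 0 :> R by rewrite pnatr_eq0 -lt0n.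
move=> HK; by rewrite -[_ *+ K]mulr_natr mulVf // subrr.
Qed.

Lemma gramP K (j j' : 'I_K) : (0 < K)%N ->
  \sum_l Pm K l j * Pm K l j' = (j == j')%:R - K%:R^-1.
Proof.
move=> K0.
have HK : K%:R != 0 :> R by rewrite pnatr_eq0 -lt0n.
under eq_bigr => l _ do rewrite PmE mulrBl.
rewrite sumrB sum_delta PmE -mulr_sumr.
have -> : \sum_l Pm K l j' = 0.
  under eq_bigr => l _ do rewrite PmE -[(l == j')%:R]mulr1.
  rewrite sumrB sum_delta sumr_const card_ord.
  by rewrite -[_ *+ K]mulr_natr mulVf // subrr.
by rewrite mulr0 subr0.
Qed.


Lemma gramW d K (U W : 'M[R]_(d, K)) c (j j' : 'I_K) : (0 < K)%N ->
  U^T *m U = 1%:M -> W = c *: (U *m Pm K) ->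
  dotv (col j W) (col j' W) = c ^+ 2 * ((j == j')%:R - K%:R^-1).
Proof.
move=> K0 HU HW.
have -> : dotv (col j W) (col j' W) = (W^T *m W) j j'.
  by rewrite dotvE !mxE; apply: eq_bigr => l _; rewrite !mxE.
have -> : W^T *m W = c ^+ 2 *: ((Pm K)^T *m Pm K).
  rewrite HW [(c *: _)^T]linearZ /= trmx_mul -scalemxAl -scalemxAr scalerA -expr2.
  by rewrite -mulmxA (mulmxA U^T) HU mul1mx.
rewrite mxE -gramP //; congr (_ * _); rewrite mxE.
by apply: eq_bigr => l _; rewrite mxE.
Qed.

Lemma sumW d K (U W : 'M[R]_(d, K)) c (h : 'cV[R]_d) : (0 < K)%N ->
  W = c *: (U *m Pm K) -> \sum_j dotv h (col j W) = 0.
Proof.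
move=> K0 HW.
under eq_bigr => j _ do rewrite dotvE.
rewrite exchange_big /= big1 // => l _.
rewrite -mulr_sumr.
have -> : \sum_j col j W l 0 = 0.
  rewrite HW; under eq_bigr => j _ do rewrite !mxE.
  rewrite -mulr_sumr exchange_big /= big1 ?mulr0 // => m _.
  by rewrite -mulr_sumr sumPm // mulr0.
by rewrite mulr0.
Qed.


Lemma CEE d K (W : 'M[R]_(d, K)) k (h : 'cV[R]_d) :
  CE_loss W k h = ln (\sum_j expR (dotv h (col j W) - dotv h (col k W))).
Proof.
rewrite /CE_loss.
set S := \sum_j _.
have S0 : 0 < S.
  rewrite /S (bigD1 k) //=.
  have := expR_gt0 (dotv h (col k W)).
  have : 0 <= \sum_(i < K | i != k) expR (dotv h (col i W)) by apply: sumr_ge0 => i _; exact: expR_ge0.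
  lra.
rewrite -lnV; last by rewrite posrE divr_gt0 // expR_gt0.
rewrite invf_div /S mulr_suml -expRN.
by congr ln; apply: eq_bigr => j _; rewrite -expRD.
Qed.


Lemma sum_expR_gt0 K (k : 'I_K) (f : 'I_K -> R) : 0 < \sum_j expR (f j).
Proof.
rewrite (bigD1 k) //=.
have := expR_gt0 (f k).
have : 0 <= \sum_(i < K | i != k) expR (f i) by apply: sumr_ge0 => i _; exact: expR_ge0.
lra.
Qed.


Lemma sum_gt0K K (k : 'I_K) (F : 'I_K -> R) : (forall j, 0 < F j) -> 0 < \sum_j F j.
Proof.
move=> HF; rewrite (bigD1 k) //=.
have := HF k.
have : 0 <= \sum_(i < K | i != k) F i by apply: sumr_ge0 => i _; exact: ltW.
lra.
Qed.

End Aux.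

Theorem theorem1 (R : realType) (K d : nat) (n : 'I_K -> nat) (EH EW : R)
  (W : 'M[R]_(d, K)) (H : features R d n) :
  (2 <= K)%N -> (K - 1 <= d)%N -> (forall k, (1 <= n k)%N) ->
  0 < EH -> 0 < EW ->
  is_scaled_simplex_ETF EW W ->
  global_minimizer EH W H ->
  forall (k k' : 'I_K) (i : 'I_(n k)),
    dotv (H k i) (col k' W) =
      Num.sqrt (EH * EW) *
        (K%:R / (K%:R - 1) * (if k == k' then 1 else 0) - (K%:R - 1)^-1).
Proof.
move=> HK Hd Hn EH0 EW0 [U [HU HW]] [Hfeas Hmin] k k' i.
have K0 : (0 < K)%N by apply: leq_trans HK.
have HKR : (1:R) < K%:R by rewrite ltr1n.
have hK0 : K%:R != 0 :> R by apply/eqP; lra.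
have hK1 : K%:R - 1 != 0 :> R by apply/eqP; lra.
set c := Num.sqrt EW * Num.sqrt (K%:R / (K%:R - 1)).
have c2 : c ^+ 2 = EW * (K%:R / (K%:R - 1)).
  rewrite exprMn !sqr_sqrtr //; first by rewrite divr_ge0 //; lra.
  exact: ltW.
have G : forall j j', dotv (col j W) (col j' W) =
    EW * (K%:R / (K%:R - 1) * (if j == j' then 1 else 0) - (K%:R - 1)^-1).
  move=> j j'; rewrite (@gramW _ _ _ U W c j j' K0 HU HW) c2.
  by case: (j == j') => /=; field; rewrite hK0 hK1.
set s := Num.sqrt EH; set r := Num.sqrt EW.
have s0 : 0 < s by rewrite sqrtr_gt0.
have r0 : 0 < r by rewrite sqrtr_gt0.
have s2 : s ^+ 2 = EH by rewrite sqr_sqrtr // ltW.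
have r2 : r ^+ 2 = EW by rewrite sqr_sqrtr // ltW.
have rn0 : r != 0 by apply/eqP; lra.
set t := s / r.
have t0 : 0 < t by rewrite divr_gt0.
have tEW : t * EW = s * r by rewrite /t -r2; field; rewrite ?hK0 ?hK1 ?rn0.
have ttEW : t * (t * EW) = EH by rewrite tEW /t -s2; field; rewrite ?hK0 ?hK1 ?rn0.
have Gkk : dotv (col k W) (col k W) = EW by rewrite G eqxx; field; rewrite ?hK0 ?hK1 ?rn0.
set h0 := t *: col k W.
have Hh0 : forall j, dotv h0 (col j W) = t * dotv (col k W) (col j W).
  by move=> j; rewrite dotvZl.
have h0h0 : dotv h0 h0 = EH by rewrite /h0 dotvZl dotvZr Gkk ttEW.
set h := H k i.
have step1 : CE_loss W k h <= CE_loss W k h0.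
  pose H' : features R d n := fun k2 i2 =>
    if (k2 == k) && (val i2 == val i) then h0 else H k2 i2.
  have fH' : feasible EH H'.
    move=> k2 i2; rewrite /H'; case: ifP => _; first by rewrite h0h0.
    exact: Hfeas.
  have := Hmin H' fH'; rewrite /objective.
  have N0 : (0 < N_total n)%N by rewrite /N_total (bigD1 k) //= addn_gt0 Hn.
  rewrite ler_pM2l; last by rewrite invr_gt0 ltr0n.
  rewrite (bigD1 k) //= [X in _ <= X](bigD1 k) //=.
  have -> : \sum_(k2 < K | k2 != k) \sum_(i2 < n k2) CE_loss W k2 (H' k2 i2) =
            \sum_(k2 < K | k2 != k) \sum_(i2 < n k2) CE_loss W k2 (H k2 i2).
    apply: eq_bigr => k2 /negbTE Hk2; apply: eq_bigr => i2 _.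
    by rewrite /H' Hk2.
  rewrite (bigD1 i) //= [X in _ <= X + _](bigD1 i) //=.
  have -> : \sum_(i2 < n k | i2 != i) CE_loss W k (H' k i2) =
            \sum_(i2 < n k | i2 != i) CE_loss W k (H k i2).
    apply: eq_bigr => i2 Hi2.
    have Hv : (val i2 == val i) = false by apply/negbTE.
    by rewrite /H' eqxx Hv.
  have -> : H' k i = h0 by rewrite /H' !eqxx.
  rewrite -/h; lra.
move: step1; rewrite !CEE ler_ln ?posrE; try by apply: (sum_expR_gt0 k).
set b := fun j => dotv h (col j W) - dotv h (col k W).
set p := fun j => dotv h0 (col j W) - dotv h0 (col k W).
move=> step2.
set a := dotv h (col k W).
set m := t * (EW * (- (K%:R - 1)^-1) - EW).
have hp : forall j, j != k -> p j = m.
  move=> j Hj; rewrite /p /m /= !Hh0 !G eqxx eq_sym (negbTE Hj) /=; field; by rewrite hK1.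
have tang : forall j, expR (p j) * (1 + (b j - p j)) <= expR (b j).
  move=> j.
  have -> : expR (b j) = expR (p j) * expR (b j - p j) by rewrite -expRD addrC subrK.
  by rewrite ler_wpM2l ?expR_ge0 ?expR_ge1Dx.
have sumtang : \sum_j expR (p j) * (1 + (b j - p j)) =
    \sum_j expR (p j) + expR m * \sum_j (b j - p j).
  rewrite mulr_sumr -big_split /=; apply: eq_bigr => j _.
  rewrite mulrDr mulr1; congr (_ + _).
  have [->|Hj] := eqVneq j k.
    by rewrite /b /p /= !subrr !mulr0.
  by rewrite hp.
have sumb : \sum_j b j = - (K%:R * a).
  rewrite /b /= sumrB (@sumW _ _ _ U W c h K0 HW) sumr_const card_ord -/a.
  by rewrite sub0r mulr_natl.
have sump : \sum_j p j = - (K%:R * (t * EW)).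
  rewrite /p /= sumrB (@sumW _ _ _ U W c h0 K0 HW) sumr_const card_ord Hh0 Gkk.
  by rewrite sub0r mulr_natl.
have key : expR m * (K%:R * (t * EW - a)) <= 0.
  have : \sum_j expR (p j) * (1 + (b j - p j)) <= \sum_j expR (b j).
    by apply: ler_sum => j _; exact: tang.
  rewrite sumtang sumrB sumb sump.
  move: step2; set Sp := \sum_j expR (p j); set Sb := \sum_j expR (b j).
  move=> h1 h2.
  have -> : expR m * (K%:R * (t * EW - a)) = expR m * (- (K%:R * a) - - (K%:R * (t * EW)))
    by congr (_ * _); ring.
  lra.
have Ha : t * EW <= a.
  move: key; rewrite pmulr_rle0 ?expR_gt0 // pmulr_rle0 ?ltr0n // subr_le0.
  done.
have hEq : h = t *: col k W.
  apply/eqP; rewrite -subr_eq0; apply/eqP; apply: dotv_eq0.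
  apply/eqP; rewrite eq_le; apply/andP; split; last first.
    rewrite dotvE; apply: sumr_ge0 => l _; rewrite -expr2; exact: sqr_ge0.
  rewrite !dotvBl !dotvBr !dotvZl !dotvZr Gkk (dotvC _ _ (col k W) h) -/a.
  have := Hfeas k i; rewrite -/h => Hhh.
  have := ler_wpM2l (ltW t0) Ha.
  lra.
rewrite hEq dotvZl G mulrA tEW sqrtrM ?(ltW EH0) //.
all: by apply: (@sum_gt0K _ _ k) => j; exact: expR_gt0.
Qed.
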